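(* Let $G=(V,E,\omega)$ be an undirected graph on $n$ vertices with positive edge weights, and let $k\ge 1$ be an integer. Set $\nu=1/(2^k-1)$ and let $V=A_0\supseteq A_1\supseteq\dots\supseteq A_{k-1}\supseteq A_k=\emptyset$ be obtained by including, for each $0\le i<k-1$, every element of $A_i$ in $A_{i+1}$ independently with probability $p_i=n^{-2^i\nu}$. For $0\le i\le k-1$ and $u\in A_i\setminus A_{i+1}$, let $p(u)\in A_{i+1}$ be a vertex with $d_G(u,p(u))=d_G(u,A_{i+1})$ (undefined if $i=k-1$), and let the bunch be $$B(u)=\{v\in A_i : d_G(u,v)<d_G(u,A_{i+1})\}\cup\{p(u)\}$$ (with $d_G(u,\emptyset)=\infty$ and $\{p(u)\}=\emptyset$ when $i=k-1$). Let $H=\{(u,v): u\in V,\ v\in B(u)\}$, where the edge $(u,v)$ has weight $d_G(u,v)$. Fix any $0<\delta<1/(8k)$ and any $x,y\in V$. Then for every $0\le i\le k-1$ at least one of the following holds: (1) $d^{((3/\delta)^i)}_{G\cup H}(x,y)\le (1+8\delta i)\, d_G(x,y)$; (2) there exists $z\in A_{i+1}$ such that $d^{((3/\delta)^i)}_{G\cup H}(x,z)\le 2\, d_G(x,y)$.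
   Context: $d_G(u,v)$ is the shortest-path distance in $G$, and $d_G(u,S)=\min_{s\in S}d_G(u,s)$. For a weighted graph $F$ and $t>0$, $d^{(t)}_F(u,v)$ denotes the minimum length of a $u$–$v$ path in $F$ with at most $t$ edges (hops). $G\cup H$ is the graph on $V$ with edge set $E\cup H$ (with the given weights). *)

(* Defs.v *)
From HB Require Import structures.
From mathcomp Require Import all_boot all_order all_algebra.
From mathcomp Require Import all_classical all_reals ereal.
Set Implicit Arguments. Unset Strict Implicit. Unset Printing Implicit Defensive.
Import Order.TTheory GRing.Theory Num.Theory.
Local Open Scope classical_set_scope.
Local Open Scope ring_scope.
Local Open Scope ereal_scope.

Section Dist.
Variables (R : realType) (V : finType).

(* A weighted (multi)graph: F a b c means there is an edge a -> b of weight c. *)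
Definition wgraph := V -> V -> \bar R -> Prop.

(* A walk from a: list of steps (next vertex, weight of the edge used). *)
Fixpoint is_walk (F : wgraph) (a : V) (s : seq (V * \bar R)) : Prop :=
  match s with
  | [::] => True
  | (b, c) :: s' => F a b c /\ is_walk F b s'
  end.

Definition wlen (s : seq (V * \bar R)) : \bar R := \sum_(bc <- s) bc.2.
Definition wend (a : V) (s : seq (V * \bar R)) : V := last a (map fst s).

Definition dist (F : wgraph) (u v : V) : \bar R :=
  ereal_inf [set wlen s | s in [set s | is_walk F u s /\ wend u s = v]].

Definition hopdist (F : wgraph) (t : R) (u v : V) : \bar R :=
  ereal_inf [set wlen s | s in
    [set s | is_walk F u s /\ wend u s = v /\ ((size s)%:R <= t)%R]].

Definition distS (F : wgraph) (u : V) (S : {set V}) : \bar R :=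
  ereal_inf [set dist F u s | s in [set s | s \in S]].

Definition graphG (e : rel V) (w : V -> V -> R) : wgraph :=
  fun a b c => e a b /\ c = (w a b)%:E.

Definition bunch (G : wgraph) (A : nat -> {set V}) (k : nat) (p : V -> V)
  (i : nat) (u v : V) : Prop :=
  (v \in A i /\ dist G u v < distS G u (A i.+1)) \/ ((i.+1 < k)%N /\ v = p u).

Definition hopE (G : wgraph) (A : nat -> {set V}) (k : nat) (p : V -> V) : wgraph :=
  fun a b c => exists i, [/\ (i < k)%N, a \in A i :\: A i.+1,
                             bunch G A k p i a b & c = dist G a b].

Definition unionGH (G : wgraph) (A : nat -> {set V}) (k : nat) (p : V -> V) : wgraph :=
  fun a b c => G a b c \/ hopE G A k p a b c \/ hopE G A k p b a c.

End Dist.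

(* Main.v *)
Require Import Defs.
From HB Require Import structures.
From mathcomp Require Import all_boot all_order all_algebra.
From mathcomp Require Import all_classical all_reals ereal.
From mathcomp Require Import lra zify.
Import Order.TTheory GRing.Theory Num.Theory.
Local Open Scope classical_set_scope.
Local Open Scope ring_scope.

Section Helpers.
Set Implicit Arguments. Unset Strict Implicit. Unset Printing Implicit Defensive.
Local Open Scope ereal_scope.
Section Walks.
Variables (R : realType) (V : finType).
Implicit Types (F : wgraph R V) (s : seq (V * \bar R)).

Lemma is_walk_cat F a s1 s2 :
  is_walk F a (s1 ++ s2) <-> is_walk F a s1 /\ is_walk F (wend a s1) s2.
Proof.
elim: s1 a => [|[b c] s1 IH] a /=; first by split=> // -[].
rewrite IH /wend /=; tauto.
Qed.

Lemma wend_cat a s1 s2 : wend a (s1 ++ s2) = wend (wend a s1) s2.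
Proof. by rewrite /wend map_cat last_cat. Qed.

Lemma wend_cons a b c s : wend a ((b, c) :: s) = wend b s.
Proof. by []. Qed.

Lemma wlen_cat s1 s2 : wlen (s1 ++ s2) = wlen s1 + wlen s2.
Proof. by rewrite /wlen big_cat. Qed.

Lemma wlen_cons b c s : wlen ((b, c) :: s) = c + wlen s.
Proof. by rewrite /wlen big_cons. Qed.

Lemma wlen_nil : wlen (V:=V) (R:=R) [::] = 0.
Proof. by rewrite /wlen big_nil. Qed.

Lemma is_walk_mono F F' a s : (forall a b c, F a b c -> F' a b c) ->
  is_walk F a s -> is_walk F' a s.
Proof. move=> H; elim: s a => [|[b c] s IH] a //= [/H ? /IH]; tauto. Qed.

Fixpoint revw (a : V) s : seq (V * \bar R) :=
  match s with [::] => [::] | (b, c) :: s' => rcons (revw b s') (a, c) end.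

Lemma wend_revw a s : wend (wend a s) (revw a s) = a.
Proof. case: s => [|[b c] s] //=; by rewrite /wend map_rcons last_rcons. Qed.

Lemma size_revw a s : size (revw a s) = size s.
Proof. elim: s a => [|[b c] s IH] a //=; by rewrite size_rcons IH. Qed.

Lemma wlen_revw a s : wlen (revw a s) = wlen s.
Proof.
elim: s a => [|[b c] s IH] a //=; rewrite -cats1 wlen_cat IH wlen_cons.
by rewrite /wlen big_cons big_nil adde0 addeC.
Qed.

Lemma is_walk_revw F a s : (forall a b c, F a b c -> F b a c) ->
  is_walk F a s -> is_walk F (wend a s) (revw a s).
Proof.
move=> Fs; elim: s a => [|[b c] s IH] a //= [Fab ws].
rewrite -cats1 is_walk_cat; split; first exact: IH.
have := wend_revw b s; rewrite /= => ->; split => //; exact: Fs.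
Qed.

End Walks.

Section Graph.
Variables (R : realType) (V : finType) (e : rel V) (w : V -> V -> R).
Hypothesis esym : symmetric e.
Hypothesis wsym : forall a b, e a b -> w a b = w b a.
Hypothesis wpos : forall a b, e a b -> (0 < w a b)%R.
Implicit Types (s : seq (V * \bar R)).

Local Notation G := (graphG e w).

Lemma Gsym a b c : G a b c -> G b a c.
Proof. by case=> eab ->; split; [rewrite esym | rewrite wsym]. Qed.

Definition rlen s : R := (\sum_(bc <- s) fine bc.2)%R.

Lemma rlen_cons b c s : rlen ((b, c) :: s) = (fine c + rlen s)%R.
Proof. by rewrite /rlen big_cons. Qed.

Lemma rlen_cat s1 s2 : rlen (s1 ++ s2) = (rlen s1 + rlen s2)%R.
Proof. by rewrite /rlen big_cat. Qed.

Lemma rlen_revw a s : rlen (revw a s) = rlen s.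
Proof.
elim: s a => [|[b c] s IH] a //=; rewrite -cats1 rlen_cat IH rlen_cons.
by rewrite /rlen big_cons big_nil addr0 addrC.
Qed.

Lemma wlenG a s : is_walk G a s -> wlen s = (rlen s)%:E.
Proof.
elim: s a => [|[b c] s IH] a /=; first by rewrite wlen_nil /rlen big_nil.
by case=> [[_ ->] /IH]; rewrite wlen_cons rlen_cons => ->.
Qed.

Lemma rlen_ge0 a s : is_walk G a s -> (0 <= rlen s)%R.
Proof.
elim: s a => [|[b c] s IH] a /=; first by rewrite /rlen big_nil.
case=> [[eab ->] /IH]; rewrite rlen_cons /= => h.
by apply: addr_ge0 => //; apply: ltW; apply: wpos.
Qed.

Lemma rlen_gt0 a s : is_walk G a s -> s != [::] -> (0 < rlen s)%R.
Proof.
case: s => [|[b c] s] //= [[eab ->] /rlen_ge0 h] _; rewrite rlen_cons /=.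
by apply: ltr_wpDr => //; apply: wpos.
Qed.

Lemma is_walk_revG a s : is_walk G a s -> is_walk G (wend a s) (revw a s).
Proof. by apply: is_walk_revw; apply: Gsym. Qed.

Lemma dist_le_walk a s : is_walk G a s -> dist G a (wend a s) <= (rlen s)%:E.
Proof.
move=> ws; rewrite -(wlenG ws); apply: ereal_inf_lbound.
by exists s.
Qed.

Lemma dist_ge0 a b : 0 <= dist G a b.
Proof.
apply: le_ereal_inf_tmp => _ [s [ws _] <-].
by rewrite (wlenG ws) lee_fin; apply: rlen_ge0 ws.
Qed.

Lemma dist_lt a b x : dist G a b < x ->
  exists s, [/\ is_walk G a s, wend a s = b & (rlen s)%:E < x].
Proof.
move/ereal_inf_lt => [_ [s [ws wb] <-]] h; exists s; split => //.
by rewrite -(wlenG ws).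
Qed.

Lemma dist_tri a b c r1 r2 : dist G a b <= r1%:E -> dist G b c <= r2%:E ->
  dist G a c <= (r1 + r2)%:E.
Proof.
move=> h1 h2; apply/lee_addgt0Pr => eps eps0.
have he : (0 < eps / 2)%R by apply: divr_gt0.
have [s1 [w1 e1 l1]] : exists s, [/\ is_walk G a s, wend a s = b & (rlen s)%:E < (r1 + eps/2)%:E].
  by apply: dist_lt; apply: (le_lt_trans h1); rewrite lte_fin ltrDl.
have [s2 [w2 e2 l2]] : exists s, [/\ is_walk G b s, wend b s = c & (rlen s)%:E < (r2 + eps/2)%:E].
  by apply: dist_lt; apply: (le_lt_trans h2); rewrite lte_fin ltrDl.
have w12 : is_walk G a (s1 ++ s2) by apply/is_walk_cat; rewrite e1.
have := dist_le_walk w12; rewrite wend_cat e1 e2 rlen_cat => /le_trans; apply.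
rewrite -EFinD lee_fin; move: l1 l2; rewrite !lte_fin; lra.
Qed.

Lemma dist_sym_le a b : dist G b a <= dist G a b.
Proof.
apply: le_ereal_inf_tmp => _ [s [ws wb] <-].
have := dist_le_walk (is_walk_revG ws); rewrite wend_revw wb rlen_revw.
by rewrite (wlenG ws).
Qed.

Lemma dist_sym a b : dist G a b = dist G b a.
Proof. by apply/eqP; rewrite eq_le !dist_sym_le. Qed.

Lemma fin_of_le (x : \bar R) (r : R) : 0 <= x -> x <= r%:E -> x = (fine x)%:E.
Proof. by case: x. Qed.

End Graph.

Section Hop.
Variables (R : realType) (V : finType) (e : rel V) (w : V -> V -> R).
Hypothesis esym : symmetric e.
Hypothesis wsym : forall a b, e a b -> w a b = w b a.
Hypothesis wpos : forall a b, e a b -> (0 < w a b)%R.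
Variables (k : nat) (A : nat -> {set V}) (p : V -> V).
Implicit Types (s : seq (V * \bar R)).

Local Notation G := (graphG e w).
Local Notation GH := (unionGH G A k p).

Lemma GHsym a b c : GH a b c -> GH b a c.
Proof. by case=> [/(Gsym esym wsym) h|[h|h]]; [left|right;right|right;left]. Qed.

Lemma GH_w a b c : GH a b c -> dist G a b <= c /\ 0 <= c.
Proof.
case=> [[eab ->]|[[i [_ _ _ ->]]|[i [_ _ _ ->]]]].
- split; last by rewrite lee_fin; apply: ltW; apply: wpos.
  have ws : is_walk G a [:: (b, (w a b)%:E)] by [].
  by have := dist_le_walk ws; rewrite /rlen big_seq1.
- by split => //; apply: dist_ge0.
- by rewrite (dist_sym esym wsym); split => //; apply: dist_ge0.
Qed.

Lemma wlen_ge0 a s : is_walk GH a s -> 0 <= wlen s.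
Proof.
elim: s a => [|[b c] s IH] a /=; first by rewrite wlen_nil.
by case=> /GH_w [_ c0] /IH h; rewrite wlen_cons adde_ge0.
Qed.

Lemma walk_dist a s r : is_walk GH a s -> wlen s <= r%:E ->
  dist G a (wend a s) <= r%:E.
Proof.
elim: s a r => [|[b c] s IH] a r /=.
  move=> _ h; apply: (@le_trans _ _ (0%R)%:E) => //; last by rewrite wlen_nil in h.
  have ws : is_walk G a [::] by [].
  by have := dist_le_walk ws; rewrite /rlen big_nil.
case=> /GH_w [dab c0] ws; rewrite wlen_cons => h.
have l0 := wlen_ge0 ws.
have cle : c <= r%:E by apply: le_trans h; rewrite leeDl.
have lle : wlen s <= r%:E by apply: le_trans h; rewrite leeDr.
rewrite (fin_of_le c0 cle) in dab h; rewrite (fin_of_le l0 lle) in h.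
have hl : wlen s <= (fine (wlen s))%:E by rewrite -(fin_of_le l0 lle).
have := IH b _ ws hl; rewrite wend_cons => hb.
have := dist_tri dab hb => /le_trans; apply.
by rewrite EFinD.
Qed.

Definition Wk x y (n r : R) := exists s, [/\ is_walk GH x s, wend x s = y,
  ((size s)%:R <= n)%R & wlen s <= r%:E].

Lemma Wk_dist x y n r : Wk x y n r -> dist G x y <= r%:E.
Proof. by case=> s [ws <- _ l]; apply: walk_dist. Qed.

Lemma Wk_nil x n r : (0 <= n)%R -> (0 <= r)%R -> Wk x x n r.
Proof. by move=> n0 r0; exists [::]; split => //; rewrite wlen_nil lee_fin. Qed.

Lemma Wk_cat x y z n1 r1 n2 r2 : Wk x y n1 r1 -> Wk y z n2 r2 ->
  Wk x z (n1 + n2) (r1 + r2).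
Proof.
case=> s1 [w1 e1 z1 l1] [s2 [w2 e2 z2 l2]]; exists (s1 ++ s2); split.
- by apply/is_walk_cat; rewrite e1.
- by rewrite wend_cat e1.
- by rewrite size_cat natrD lerD.
- by rewrite wlen_cat EFinD leeD.
Qed.

Lemma Wk_mono x y n r n' r' : Wk x y n r -> (n <= n')%R -> (r <= r')%R ->
  Wk x y n' r'.
Proof.
case=> s [ws ee z l] nn rr; exists s; split => //; first exact: le_trans nn.
by apply: le_trans l _; rewrite lee_fin.
Qed.

Lemma Wk_rev x y n r : Wk x y n r -> Wk y x n r.
Proof.
case=> s [ws ee z l]; exists (revw x s); split.
- by rewrite -ee; apply: is_walk_revw => //; apply: GHsym.
- by rewrite -ee wend_revw.
- by rewrite size_revw.
- by rewrite wlen_revw.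
Qed.

Lemma Wk_edge a b c r : GH a b c -> c <= r%:E -> Wk a b 1 r.
Proof.
move=> h cr; exists [:: (b, c)]; split => //.
by rewrite wlen_cons wlen_nil adde0.
Qed.

Lemma Wk_G a s : is_walk G a s -> Wk a (wend a s) (size s)%:R (rlen s).
Proof.
move=> ws; exists s; split => //.
- by apply: is_walk_mono ws => ? ? ? ?; left.
- by rewrite (wlenG ws).
Qed.

End Hop.

Section Pieces.
Variables (R : realType) (V : finType) (e : rel V) (w : V -> V -> R).
Hypothesis wpos : forall a b, e a b -> (0 < w a b)%R.
Local Notation G := (graphG e w).

Lemma pieces a s (L : R) : (0 < L)%R -> is_walk G a s -> s != [::] ->
  exists ps : seq (seq (V * \bar R)), [/\ flatten ps = s,
    all (fun q => (size q == 1)%N || (rlen q <= L)%R) ps &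
    (((size ps)%:R - 1) * L <= 2 * rlen s - rlen (head [::] ps))%R].
Proof.
move=> L0; elim: s a => [|[b c] s IH] a //= [[eab ->] ws] _.
have wab := wpos eab.
have rs0 := rlen_ge0 wpos ws.
case: (eqVneq s [::]) => [->|sn].
  exists [:: [:: (b, (w a b)%:E)]]; split => //=.
  by rewrite rlen_cons /rlen big_nil /=; lra.
have [ps [fs al cnt]] := IH b ws sn.
case: ps fs al cnt => [|q1 rest] fs; first by move: sn; rewrite -fs.
move=> /= /andP [q1p alr] cnt.
case: (lerP (w a b + rlen q1) L) => hl.
- exists (((b, (w a b)%:E) :: q1) :: rest); split => //=.
  + by rewrite -fs.
  + by rewrite alr rlen_cons /= hl orbT.
  + rewrite !rlen_cons /=; move: cnt => /=; lra.
- exists ([:: (b, (w a b)%:E)] :: q1 :: rest); split => //=.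
  + by rewrite -fs.
  + by rewrite q1p alr.
  + have r0 : rlen (@nil (V * \bar R)) = 0%R by rewrite /rlen big_nil.
    move: cnt => /=; rewrite !rlen_cons r0 /=.
    rewrite -[(size rest).+2]addn2 -[(size rest).+1]addn1 !natrD; lra.
Qed.

End Pieces.

Section Chain.
Variables (R : realType) (V : finType) (e : rel V) (w : V -> V -> R).
Hypothesis esym : symmetric e.
Hypothesis wsym : forall a b, e a b -> w a b = w b a.
Hypothesis wpos : forall a b, e a b -> (0 < w a b)%R.
Variables (k : nat) (A : nat -> {set V}) (p : V -> V).
Local Notation G := (graphG e w).
Local Notation WK := (Wk e w k A p).

Lemma rlen_nil : rlen (@nil (V * \bar R)) = 0%R.
Proof. by rewrite /rlen big_nil. Qed.

Lemma dist_refl a : dist G a a <= 0%R%:E.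
Proof.
have ws : is_walk G a [::] by [].
by have := dist_le_walk ws; rewrite rlen_nil.
Qed.

Definition good (t c : R) a (q : seq (V * \bar R)) := WK a (wend a q) t (c * rlen q).
Definition bad i (t Lam : R) a (q : seq (V * \bar R)) :=
  (exists z, z \in A i /\ WK a z t (2 * Lam)) /\
  (exists z, z \in A i /\ WK (wend a q) z t (2 * Lam)).

Fixpoint chainOK i t c Lam a (ps : seq (seq (V * \bar R))) : Prop :=
  match ps with
  | [::] => True
  | q :: ps' => (is_walk G a q /\ (good t c a q \/ bad i t Lam a q)) /\
                chainOK i t c Lam (wend a q) ps'
  end.

Lemma chain_walk i t c Lam a ps : chainOK i t c Lam a ps ->
  is_walk G a (flatten ps).
Proof.
elim: ps a => [|q ps IH] a //= [[wq _] ch].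
by apply/is_walk_cat; split => //; apply: IH.
Qed.

Lemma chain_res i t c Lam a ps : (0 <= t)%R -> (0 <= c)%R ->
  chainOK i t c Lam a ps ->
  WK a (wend a (flatten ps)) ((size ps)%:R * t) (c * rlen (flatten ps)) \/
  exists u u' z z' (nl nr : nat) sl sm sr,
    [/\ WK a u (nl%:R * t) (c * sl), dist G a u <= sl%:E, z \in A i
      & WK u z t (2 * Lam)] /\
    [/\ z' \in A i, WK u' z' t (2 * Lam),
        WK u' (wend a (flatten ps)) (nr%:R * t) (c * sr)
      & dist G u u' <= sm%:E] /\
    [/\ (0 <= sl)%R, (0 <= sm)%R, (0 <= sr)%R,
        (sl + sm + sr = rlen (flatten ps))%R & (nl + nr < size ps)%N].
Proof.
move=> t0 c0; elim: ps a => [|q ps IH] a /=.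
  by move=> _; left; rewrite rlen_nil mulr0 mul0r; apply: Wk_nil.
case=> [[wq gb] ch]; rewrite wend_cat rlen_cat.
have l0 := rlen_ge0 wpos wq.
have daa := dist_le_walk wq.
have IH' := IH _ ch.
case: gb => [g|[[z [zA zW]] [z' [z'A z'W]]]].
- case: IH' => [ag | [u [u' [z [z' [nl [nr [sl [sm [sr
      [[h1 h2 h3 h4] [[h5 h6 h7 h8] [h9 h10 h11 h12 h13]]]]]]]]]]]]].
  + left; apply: (Wk_mono (Wk_cat g ag)).
    * by rewrite -addn1 natrD mulrDl mul1r addrC.
    * by rewrite mulrDr.
  + right; exists u, u', z, z', nl.+1, nr, (rlen q + sl)%R, sm, sr.
    split; [split|split; [split|split]] => //.
    * apply: (Wk_mono (Wk_cat g h1)).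
      - by rewrite -addn1 natrD mulrDl mul1r addrC.
      - by rewrite mulrDr.
    * exact: dist_tri daa h2.
    * exact: addr_ge0.
    * by rewrite -h12; lra.
- case: IH' => [ag | [u [u' [z1 [z1' [nl [nr [sl [sm [sr
      [[h1 h2 h3 h4] [[h5 h6 h7 h8] [h9 h10 h11 h12 h13]]]]]]]]]]]]].
  + right; exists a, (wend a q), z, z', 0%N, (size ps), 0%R, (rlen q), (rlen (flatten ps)).
    split; [split|split; [split|split]] => //.
    * by apply: Wk_nil; rewrite ?mul0r ?mulr0.
    * exact: dist_refl.
    * exact: (rlen_ge0 wpos (chain_walk ch)).
    * by rewrite add0r.
  + right; exists a, u', z, z1', 0%N, nr, 0%R, (rlen q + sl + sm)%R, sr.
    split; [split|split; [split|split]] => //.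
    * by apply: Wk_nil; rewrite ?mul0r ?mulr0.
    * exact: dist_refl.
    * exact: dist_tri (dist_tri daa h2) h8.
    * by rewrite addr_ge0 // addr_ge0.
    * by rewrite -h12; lra.
    * by move: h13; lia.
Qed.

End Chain.

Section Main.
Variables (R : realType) (V : finType) (e : rel V) (w : V -> V -> R).
Hypothesis esym : symmetric e.
Hypothesis wsym : forall a b, e a b -> w a b = w b a.
Hypothesis wpos : forall a b, e a b -> (0 < w a b)%R.
Variables (k : nat) (A : nat -> {set V}) (p : V -> V) (delta : R).
Local Notation G := (graphG e w).
Local Notation GH := (unionGH G A k p).
Local Notation WK := (Wk e w k A p).
Hypothesis hk : (1 <= k)%N.
Hypothesis A0 : A 0%N = [set: V]%SET.
Hypothesis Ak : A k = finset.set0.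
Hypothesis hp : forall (i : nat) (u : V), (i.+1 < k)%N -> u \in A i :\: A i.+1 ->
     p u \in A i.+1 /\ dist G u (p u) = distS G u (A i.+1).
Hypothesis d0 : (0 < delta)%R.
Hypothesis d1 : (delta < 1 / (8 * k%:R))%R.

Lemma bunch_step i z z' r : (i < k)%N -> z \in A i :\: A i.+1 -> z' \in A i ->
  dist G z z' <= r%:E ->
  WK z z' 1 r \/ exists y, y \in A i.+1 /\ WK z y 1 r.
Proof.
move=> ik zA z'A dr.
case: (ltP (dist G z z') (distS G z (A i.+1))) => h.
- left; apply: (Wk_edge (c := dist G z z')) dr.
  by right; left; exists i; split => //; left; split.
- case: (ltnP i.+1 k) => hik.
  + have [pA pd] := hp hik zA; right; exists (p z); split => //.
    apply: (Wk_edge (c := dist G z (p z))).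
      by right; left; exists i; split => //; right; split.
    by rewrite pd; apply: le_trans h dr.
  + have ik' : i.+1 = k by apply/eqP; rewrite eqn_leq hik ik.
    exfalso; move: h; rewrite ik' Ak.
    have -> : distS G z finset.set0 = +oo.
      apply/eqP; rewrite eq_le leey /=; apply: le_ereal_inf_tmp => x0 [s].
      by rewrite /= finset.in_set0.
    move=> h; have := le_trans h dr; by rewrite leNgt ltey.
Qed.

Definition tt i := ((3 / delta) ^+ i)%R.
Definition cc i := (1 + 8 * delta * i%:R)%R.
Definition Qc i x y (L : R) := WK x y (tt i) (cc i * L) \/
  exists z, z \in A i.+1 /\ WK x z (tt i) (2 * L).

Lemma k8 : (delta * (8 * k%:R) < 1)%R.
Proof.
have k0 : (0 < 8 * k%:R :> R)%R by apply: mulr_gt0 => //; rewrite ltr0n.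
by rewrite -ltr_pdivlMr.
Qed.

Lemma d8 : (8 * delta <= 1)%R.
Proof.
have := k8; have : (1 <= k%:R :> R)%R by rewrite ler1n.
move=> h1 h2; nra.
Qed.

Lemma T1 : (1 <= 3 / delta)%R.
Proof. by rewrite ler_pdivlMr //; have := d8; lra. Qed.

Lemma tt1 i : (1 <= tt i)%R.
Proof. exact: exprn_ege1 T1. Qed.

Lemma Q0 x s : is_walk G x s -> Qc 0 x (wend x s) (rlen s).
Proof.
move=> ws; have l0 := rlen_ge0 wpos ws.
case: (boolP (x \in A 1)) => xA1.
  right; exists x; split => //; apply: Wk_nil.
  - by have := tt1 0; lra.
  - lra.
have xA : x \in A 0 :\: A 1 by rewrite finset.in_setD xA1 A0 finset.in_setT.
have yA : wend x s \in A 0 by rewrite A0 finset.in_setT.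
have [h|[z [zA h]]] := bunch_step hk xA yA (dist_le_walk ws).
- by left; apply: (Wk_mono h); rewrite /tt /cc ?expr0 ?mulr0 ?addr0 ?mul1r.
- right; exists z; split => //; apply: (Wk_mono h); rewrite /tt ?expr0 //; lra.
Qed.

Lemma Qstep i : (i.+1 < k)%N ->
  (forall x s, is_walk G x s -> Qc i x (wend x s) (rlen s)) ->
  forall x s, is_walk G x s -> Qc i.+1 x (wend x s) (rlen s).
Proof.
move=> ik IH x s ws.
have t1 := tt1 i.
have c1 : (1 <= cc i)%R.
  have : (0 <= delta * i%:R)%R by rewrite mulr_ge0 // ltW.
  rewrite /cc; lra.
have ttS : tt i.+1 = (3 / delta * tt i)%R by rewrite /tt exprS.
have ccS : cc i.+1 = (cc i + 8 * delta)%R by rewrite /cc -addn1 natrD; lra.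
have l0 := rlen_ge0 wpos ws.
case: (eqVneq s [::]) => [sn|sn].
  by left; rewrite sn rlen_nil mulr0; apply: Wk_nil => //; have := tt1 i.+1; lra.
have L0 := rlen_gt0 wpos ws sn.
set L := rlen s in l0 L0 *.
set t := tt i in t1 ttS *; set c := cc i in c1 ccS *.
have Lam0 : (0 < delta * L)%R by apply: mulr_gt0.
have [ps [fs al cnt]] := pieces wpos Lam0 ws sn.
have build : forall ps a, is_walk G a (flatten ps) ->
    all (fun q => (size q == 1)%N || (rlen q <= delta * L)%R) ps ->
    chainOK e w k A p i.+1 t c (delta * L) a ps.
  elim => [|q ps' IHp] a //= /is_walk_cat [wq wr] /andP [qp alr].
  split; last exact: IHp.
  split => //; have lq := rlen_ge0 wpos wq.
  case/orP: qp => [/eqP sz1|rl].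
  - left; rewrite /good; apply: (Wk_mono (Wk_G k A p wq)).
    + by rewrite sz1.
    + nra.
  - have := IH a q wq; case => [g|[z [zA zW]]]; first by left.
    have := IH _ _ (is_walk_revG esym wsym wq); rewrite wend_revw rlen_revw.
    case => [g'|[z' [z'A z'W]]]; first by left; exact: (Wk_rev esym wsym g').
    right; split.
    + exists z; split => //; apply: (Wk_mono zW) => //; lra.
    + exists z'; split => //; apply: (Wk_mono z'W) => //; lra.
have ch : chainOK e w k A p i.+1 t c (delta * L) x ps by apply: build => //; rewrite fs.
change (rlen s) with L in cnt.
have hd0 : (0 <= rlen (head [::] ps))%R.
  case: ps fs {al cnt ch} => [|q ps] fs /=; first by rewrite rlen_nil.
  by move: ws; rewrite -fs /= => /is_walk_cat [wq _]; apply: rlen_ge0 wq.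
set J := size ps in cnt.
have hJ : ((J%:R - 1) * delta <= 2)%R by nra.
have K8 := k8; have D8 := d8.
have ik2 : (i%:R + 2 <= k%:R :> R)%R by rewrite -[2%R]/(2%:R) -natrD ler_nat addn2.
have K2 : (c + 6 * delta <= 2)%R.
  rewrite /c /cc; have : (delta * (i%:R + 2) <= delta * k%:R)%R by rewrite ler_pM2l.
  nra.
set T := (3 / delta)%R in ttS *.
have Td : (T * delta = 3)%R by rewrite /T mulrAC -mulrA divff ?mulr1 // gt_eqF.
have K1 : (1 <= T - J%:R - 1)%R by nra.
have t0 : (0 <= t)%R by lra.
have c0 : (0 <= c)%R by lra.
rewrite /Qc ttS ccS.
case: (chain_res wpos t0 c0 ch) => [ag|[u [u' [z [z' [nl [nr [sl [sm [sr
      [[h1 h2 h3 h4] [[h5 h6 h7 h8] [h9 h10 h11 h12 h13]]]]]]]]]]]]].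
  left; rewrite fs in ag; apply: (Wk_mono ag).
  - have : (0 <= (T - J%:R - 1) * t)%R by apply: mulr_ge0 => //; lra.
    nra.
  - change (rlen s) with L; rewrite /c /cc; have := Lam0; nra.
rewrite fs in h7 h12.
change (rlen s) with L in h12.
have hn : ((nl%:R + nr%:R + 1) <= J%:R :> R)%R by rewrite -natrD natr1 ler_nat.
have hnl : (0 <= nl%:R :> R)%R by [].
have hnr : (0 <= nr%:R :> R)%R by [].
have P1 : (0 <= (T - J%:R - 1 - 1) * t)%R by apply: mulr_ge0 => //; lra.
have P2 : (0 <= (J%:R - nl%:R - nr%:R - 1) * t)%R by apply: mulr_ge0 => //; lra.
have P3 : (0 <= nr%:R * t)%R by apply: mulr_ge0.
have Q1 : (0 <= (2 - c - 6 * delta) * L)%R by apply: mulr_ge0; lra.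
have Q2 : (0 <= (c - 1) * sm)%R by apply: mulr_ge0; lra.
have Q3 : (0 <= c * sr)%R by apply: mulr_ge0.
have Q4 : (0 <= c * sm)%R by apply: mulr_ge0.
have Q5 : (0 <= delta * L)%R by lra.
case: (boolP (z \in A i.+2)) => zA2.
  right; exists z; split => //; apply: (Wk_mono (Wk_cat h1 h4)).
  - lra.
  - rewrite -h12 in Q1 Q5 *; lra.
have zD : z \in A i.+1 :\: A i.+2 by rewrite finset.in_setD zA2 h3.
have dzz : dist G z z' <= (2 * (delta * L) + sm + 2 * (delta * L))%R%:E.
  apply: dist_tri _ (Wk_dist esym wsym wpos h6).
  exact: dist_tri (Wk_dist esym wsym wpos (Wk_rev esym wsym h4)) h8.
have [hz|[y [yA hy]]] := bunch_step ik zD h5 dzz.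
- left; apply: (Wk_mono (Wk_cat (Wk_cat (Wk_cat (Wk_cat h1 h4) hz)
     (Wk_rev esym wsym h6)) h7)).
  + lra.
  + rewrite -h12 in Q1 Q5 *; lra.
- right; exists y; split => //.
  apply: (Wk_mono (Wk_cat (Wk_cat h1 h4) hy)).
  + lra.
  + rewrite -h12 in Q1 Q5 *; lra.
Qed.

Lemma Qall i : (i < k)%N -> forall x s, is_walk G x s -> Qc i x (wend x s) (rlen s).
Proof.
elim: i => [|i IHi] ik; first exact: Q0.
by apply: Qstep => //; apply: IHi; apply: ltnW.
Qed.

Lemma Wk_hop x y t r : WK x y t r -> hopdist GH t x y <= r%:E.
Proof.
case=> s [ws ee sz l]; apply: le_trans l; apply: ereal_inf_lbound.
by exists s.
Qed.

Lemma ex_between (a : R) (x : \bar R) (cst : R) : (0 < cst)%R ->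
  (cst * a)%:E < x -> exists r, (a < r)%R /\ (cst * r)%:E <= x.
Proof.
move=> c0; case: x => [h| |] //.
- rewrite lte_fin => h0; exists (h / cst)%R; split.
  + by rewrite ltr_pdivlMr // mulrC.
  + by rewrite mulrC divfK ?gt_eqF.
- by move=> _; exists (a + 1)%R; split; [lra | exact: leey].
Qed.

Lemma final i x y : (i < k)%N ->
  (hopdist GH (tt i) x y <= ((cc i)%:E * dist G x y)) \/
  exists z, z \in A i.+1 /\ hopdist GH (tt i) x z <= (2%:E * dist G x y).
Proof.
move=> ik.
have dge := dist_ge0 wpos x y.
have c0 : (0 < cc i)%R.
  have : (0 <= delta * i%:R)%R by rewrite mulr_ge0 // ltW.
  rewrite /cc; lra.
case Dx: (dist G x y) dge => [d| |] dge //; last first.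
  by left; rewrite gt0_muley ?lte_fin //; exact: leey.
rewrite lee_fin in dge.
case: (pselect (exists z, z \in A i.+1 /\ hopdist GH (tt i) x z <= 2%:E * d%:E)) => [H|H].
  by right.
left; rewrite leNgt; apply/negP => hlt.
rewrite -EFinM in hlt.
have [r1 [dr1 hr1]] := ex_between c0 hlt.
have [h2 [lt2 hz2]] : exists h2, (2 * d)%:E < h2 /\
    forall z, z \in A i.+1 -> h2 <= hopdist GH (tt i) x z.
  case: (pselect (exists z0, z0 \in A i.+1)) => [[z0 z0A]|N].
  - case: (@arg_minP _ _ V z0 (fun z => z \in A i.+1) (fun z => hopdist GH (tt i) x z) z0A).
    move=> zm zmA zmin; exists (hopdist GH (tt i) x zm); split => //.
    rewrite ltNge; apply/negP => hle0; apply: H; exists zm; split => //.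
  - by exists +oo; split; [exact: ltey | move=> z zA; exfalso; apply: N; exists z].
have [r2 [dr2 hr2]] := ex_between (ltr0Sn _ 1) lt2.
have : dist G x y < (Num.min r1 r2)%:E by rewrite Dx lte_fin lt_min dr1 dr2.
case/dist_lt => s [ws ee ls].
rewrite lte_fin lt_min in ls; case/andP: ls => ls1 ls2.
have := Qall ik ws; rewrite ee; case => [hw|[z [zA hw]]].
- have hle := Wk_hop hw.
  have : hopdist GH (tt i) x y < hopdist GH (tt i) x y.
    apply: le_lt_trans hle _; apply: lt_le_trans hr1.
    by rewrite lte_fin ltr_pM2l.
  by rewrite ltxx.
- have hle := Wk_hop hw.
  have : hopdist GH (tt i) x z < hopdist GH (tt i) x z.
    apply: le_lt_trans hle _; apply: lt_le_trans (hz2 z zA).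
    apply: lt_le_trans hr2; rewrite lte_fin ltr_pM2l //.
  by rewrite ltxx.
Qed.

End Main.

End Helpers.

Theorem mainTheorem1 (R : realType) (V : finType) (e : rel V) (w : V -> V -> R)
  (k : nat) (A : nat -> {set V}) (p : V -> V) (delta : R) (x y : V) :
  symmetric e ->
  (forall a b, e a b -> w a b = w b a) ->
  (forall a b, e a b -> 0 < w a b) ->
  (1 <= k)%N ->
  A 0%N = [set: V]%SET ->
  (forall i, (i < k)%N -> A i.+1 \subset A i) ->
  A k = finset.set0 ->
  (forall (i : nat) (u : V), (i.+1 < k)%N -> u \in A i :\: A i.+1 ->
     p u \in A i.+1 /\ dist (graphG e w) u (p u) = distS (graphG e w) u (A i.+1)) ->
  0 < delta -> delta < 1 / (8 * k%:R) ->
  forall i : nat, (i < k)%N ->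
    (hopdist (unionGH (graphG e w) A k p) ((3 / delta) ^+ i) x y
       <= ((1 + 8 * delta * i%:R)%:E * dist (graphG e w) x y)%E)%E
    \/ (exists z, z \in A i.+1 /\
        (hopdist (unionGH (graphG e w) A k p) ((3 / delta) ^+ i) x z
           <= (2%:E * dist (graphG e w) x y)%E)%E).
Proof.
move=> esym wsym wpos hk A0 _ Ak hp d0 d1 i ik.
by apply: final.
Qed.
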